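(* Let $1\le k\le n-1$, let $I,J$ be tightly $r$-interlacing $k$-subsets of $\{1,\dots,n\}$, write $I\setminus J=\{i_1,\dots,i_r\}$ and $J\setminus I=\{j_1,\dots,j_r\}$ with $1\le i_1<j_1<i_2<j_2<\dots<i_r<j_r\le n$, and let $b_1,\dots,b_{2r}\in\mathbb{C}[[t]]$ satisfy $\sum_{l=1}^{2r}b_l=0$. Then the module $\mathbb{M}(I,J)$ (defined in the context) is a maximal Cohen–Macaulay $B_{k,n}$-module, i.e.\ it lies in $\mathrm{CM}(B_{k,n})$.
   Context: Let $\Gamma_n$ be the quiver with vertices $1,\dots,n$ arranged on a cycle (vertex $0$ is identified with vertex $n$) and arrows $x_i\colon i-1\to i$, $y_i\colon i\to i-1$ for $i=1,\dots,n$. The algebra $B_{k,n}$ is the completed path algebra of $\Gamma_n$ modulo the closure of the ideal generated by the relations $xy=yx$ and $x^k=y^{n-k}$ at every vertex. Its centre is $Z=\mathbb{C}[[t]]$ with $t=\sum_i x_iy_i$. $\mathrm{CM}(B_{k,n})$ denotes the category of (maximal) Cohen–Macaulay $B_{k,n}$-modules, which are exactly the $B_{k,n}$-modules that are free of finite rank over $Z$; such a module is a representation of $\Gamma_n$ with a free $Z$-module of the same rank at each vertex. Two $k$-subsets $I,J$ of $\{1,\dots,n\}$ are $r$-interlacing if there are $\{i_1,i_3,\dots,i_{2r-1}\}\subset I\setminus J$ and $\{i_2,i_4,\dots,i_{2r}\}\subset J\setminus I$ with $i_1<i_2<\dots<i_{2r}<i_1$ cyclically, and no larger subsets with this property; they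 are tightly $r$-interlacing if moreover $|I\cap J|=k-r$. The module $\mathbb{M}(I,J)$: at each vertex put $V_i=\mathbb{C}[[t]]\oplus\mathbb{C}[[t]]$; for $l=1,\dots,r$ set $x_{i_l}=\begin{pmatrix}t&b_{2l-1}\\0&1\end{pmatrix}$, $y_{i_l}=\begin{pmatrix}1&-b_{2l-1}\\0&t\end{pmatrix}$, $x_{j_l}=\begin{pmatrix}1&b_{2l}\\0&t\end{pmatrix}$, $y_{j_l}=\begin{pmatrix}t&-b_{2l}\\0&1\end{pmatrix}$; for $i\notin I\cup J$ set $x_i=tE$, $y_i=E$; for $i\in I\cap J$ set $x_i=E$, $y_i=tE$, where $E$ is the $2\times2$ identity matrix. *)

(* Defs.v *)
From HB Require Import structures.
From mathcomp Require Import all_boot all_order all_algebra.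
From mathcomp Require Import finmap.
From mathcomp Require Import boolp.
From mathcomp Require Import complex.
From mathcomp Require Import Rstruct.
From Stdlib Require Rdefinitions.

Set Implicit Arguments.
Unset Strict Implicit.
Unset Printing Implicit Defensive.

Import GRing.Theory.
Local Open Scope ring_scope.

Record fps (K : Type) := FPS { fcoef : nat -> K }.

Section FPS.
Variable K : comNzRingType.

HB.instance Definition _ := gen_eqMixin (fps K).
HB.instance Definition _ := gen_choiceMixin (fps K).

Lemma fpsP (f g : fps K) : (forall n, fcoef f n = fcoef g n) -> f = g.
Proof. by case: f; case: g => g f /= H; congr FPS; apply: funext. Qed.

Definition fps0 : fps K := FPS (fun _ => 0).
Definition fpsopp (f : fps K) : fps K := FPS (fun n => - fcoef f n).
Definition fpsadd (f g : fps K) : fps K := FPS (fun n => fcoef f n + fcoef g n).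

Lemma fpsaddA : associative fpsadd.
Proof. by move=> f g h; apply: fpsP => n /=; rewrite addrA. Qed.
Lemma fpsaddC : commutative fpsadd.
Proof. by move=> f g; apply: fpsP => n /=; rewrite addrC. Qed.
Lemma fpsadd0 : left_id fps0 fpsadd.
Proof. by move=> f; apply: fpsP => n /=; rewrite add0r. Qed.
Lemma fpsaddN : left_inverse fps0 fpsopp fpsadd.
Proof. by move=> f; apply: fpsP => n /=; rewrite addNr. Qed.

HB.instance Definition _ :=
  GRing.isZmodule.Build (fps K) fpsaddA fpsaddC fpsadd0 fpsaddN.

Definition fps1 : fps K := FPS (fun n => (n == 0)%:R).
Definition fpsmul (f g : fps K) : fps K :=
  FPS (fun n => \sum_(i < n.+1) fcoef f i * fcoef g (n - i)).

Definition trunc (m : nat) (f : fps K) : {poly K} := \poly_(i < m) fcoef f i.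

Lemma trunc_mul (m : nat) (f g : fps K) (n : nat) : (n < m)%N ->
  (trunc m f * trunc m g)`_n = fcoef (fpsmul f g) n.
Proof.
move=> nm; rewrite coefM /=; apply: eq_bigr => i _.
rewrite !coef_poly; have ilt : (i < m)%N by apply: leq_ltn_trans nm; rewrite -ltnS.
by rewrite ilt (leq_ltn_trans (leq_subr _ _) nm).
Qed.

Lemma coefM_lowl (p q s : {poly K}) (n : nat) :
  (forall i, (i <= n)%N -> p`_i = q`_i) -> (p * s)`_n = (q * s)`_n.
Proof. by move=> H; rewrite !coefM; apply: eq_bigr => i _; rewrite H // -ltnS. Qed.

Lemma coefM_lowr (p q s : {poly K}) (n : nat) :
  (forall i, (i <= n)%N -> p`_i = q`_i) -> (s * p)`_n = (s * q)`_n.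
Proof. by move=> H; rewrite ![s * _]mulrC; apply: coefM_lowl. Qed.

Lemma fpsmulA : associative fpsmul.
Proof.
move=> f g h; apply: fpsP => n.
rewrite -(trunc_mul _ _ (ltnSn n)) -[RHS](trunc_mul _ _ (ltnSn n)).
have E1 : forall i, (i <= n)%N ->
   (trunc n.+1 (fpsmul g h))`_i = (trunc n.+1 g * trunc n.+1 h)`_i.
  by move=> i lin; rewrite trunc_mul // coef_poly ltnS lin.
have E2 : forall i, (i <= n)%N ->
   (trunc n.+1 (fpsmul f g))`_i = (trunc n.+1 f * trunc n.+1 g)`_i.
  by move=> i lin; rewrite trunc_mul // coef_poly ltnS lin.
by rewrite (coefM_lowr _ E1) (coefM_lowl _ E2) mulrA.
Qed.

Lemma fpsmulC : commutative fpsmul.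
Proof.
move=> f g; apply: fpsP => n.
by rewrite -(trunc_mul _ _ (ltnSn n)) -[RHS](trunc_mul _ _ (ltnSn n)) mulrC.
Qed.

Lemma fpsmul1 : left_id fps1 fpsmul.
Proof.
move=> f; apply: fpsP => n; rewrite -(trunc_mul _ _ (ltnSn n)).
have E : forall i, (i <= n)%N -> (trunc n.+1 fps1)`_i = (1 : {poly K})`_i.
  by move=> i lin; rewrite coef_poly ltnS lin coef1.
by rewrite (coefM_lowl _ E) mul1r coef_poly ltnSn.
Qed.

Lemma fpsmulDl : left_distributive fpsmul fpsadd.
Proof.
move=> f g h; apply: fpsP => n /=; rewrite -big_split /=.
by apply: eq_bigr => i _; rewrite mulrDl.
Qed.

Lemma fps1_neq0 : fps1 != fps0.
Proof.
apply/eqP => /(congr1 (fun f => fcoef f 0)) /= /eqP; rewrite oner_eq0; by [].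
Qed.

HB.instance Definition _ :=
  GRing.Zmodule_isComNzRing.Build (fps K) fpsmulA fpsmulC fpsmul1 fpsmulDl fps1_neq0.

Definition fpsX : fps K := FPS (fun n => (n == 1)%:R).

End FPS.

Definition CC : fieldType := (Rdefinitions.R)[i].
Definition Ct : comNzRingType := fps CC.
Definition tt_ : Ct := fpsX CC.

(* Arrows x_a : a-1 -> a and y_a : a -> a-1 are labelled by a in {1..n};
   [lab n a] reduces a positive integer a to its label in {1..n}
   (vertex 0 is identified with vertex n). *)
Definition lab (n a : nat) : nat := (a.-1 %% n).+1.

(* X a (resp. Y a) is the matrix of x_a (resp. y_a), acting on column
   vectors; composition of maps is matrix product.  Relations at a vertex
   v in {1..n}:
     - xy = yx :  x_v o y_v = y_{v+1} o x_{v+1}   (maps V_v -> V_v);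
     - the central element t = sum_i x_i y_i acts on V_v as multiplication
       by t (so that the Z-module structure is the free one C[[t]]^m);
     - x^k = y^(n-k) : x_{v+k} o ... o x_{v+1} = y_{v+k+1} o ... o y_{v+n}
       (both paths V_v -> V_{v+k}, indices mod n). *)
Definition CM_rep (n k m : nat) (X Y : nat -> 'M[Ct]_m) : Prop :=
  forall v, (1 <= v <= n)%N ->
    [/\ X (lab n v) *m Y (lab n v) = Y (lab n v.+1) *m X (lab n v.+1),
        X (lab n v) *m Y (lab n v) = tt_%:M &
        \prod_(j < k) X (lab n (v + k - j)%N) =
        \prod_(j < (n - k)%N) Y (lab n (v + k + 1 + j)%N)].

Local Open Scope fset_scope.

Definition ksubset (n k : nat) (I : {fset nat}) : Prop :=
  (forall x, x \in I -> (1 <= x <= n)%N) /\ #|` I| = k.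

Definition cyc_increasing (s : seq nat) : Prop :=
  exists p, sorted ltn (rot p s).

(* s alternates: odd positions (1st, 3rd, ...) in I \ J,
   even positions in J \ I, and s has even length. *)
Definition alternating (I J : {fset nat}) (s : seq nat) : Prop :=
  ~~ odd (size s) /\
  (forall p, (p < size s)%N ->
     if odd p then nth 0%N s p \in J `\` I else nth 0%N s p \in I `\` J) /\
  cyc_increasing s.

Definition interlacing (r : nat) (I J : {fset nat}) : Prop :=
  (exists s, size s = (2 * r)%N /\ alternating I J s) /\
  (forall s, alternating I J s -> (size s <= 2 * r)%N).

Definition tightly_interlacing (k r : nat) (I J : {fset nat}) : Prop :=
  interlacing r I J /\ #|` I `&` J| = (k - r)%N.

Local Open Scope ring_scope.

Definition mx2 (a b c d : Ct) : 'M[Ct]_2 :=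
  \matrix_(p < 2, q < 2)
    if p == 0 then (if q == 0 then a else b) else (if q == 0 then c else d).

Definition E2 : 'M[Ct]_2 := mx2 1 0 0 1.

(* i, j : nat -> nat enumerate I \ J = {i_1..i_r} and J \ I = {j_1..j_r}
   (indices 1..r), b : nat -> Ct gives b_1 .. b_{2r}. *)
Definition MIJ_x (I J : {fset nat}) (r : nat) (i j : nat -> nat)
    (b : nat -> Ct) (a : nat) : 'M[Ct]_2 :=
  if [pick l : 'I_r | i l.+1 == a] is Some l then
    mx2 tt_ (b (2 * l.+1 - 1)%N) 0 1
  else if [pick l : 'I_r | j l.+1 == a] is Some l then
    mx2 1 (b (2 * l.+1)%N) 0 tt_
  else if (a \in I) && (a \in J) then E2
  else tt_ *: E2.

Definition MIJ_y (I J : {fset nat}) (r : nat) (i j : nat -> nat)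
    (b : nat -> Ct) (a : nat) : 'M[Ct]_2 :=
  if [pick l : 'I_r | i l.+1 == a] is Some l then
    mx2 1 (- b (2 * l.+1 - 1)%N) 0 tt_
  else if [pick l : 'I_r | j l.+1 == a] is Some l then
    mx2 tt_ (- b (2 * l.+1)%N) 0 1
  else if (a \in I) && (a \in J) then tt_ *: E2
  else E2.

(* Main.v *)
Require Import Defs.
From HB Require Import structures.
From mathcomp Require Import all_boot all_order all_algebra.
From mathcomp Require Import finmap.
From mathcomp Require Import zify ring.
Import GRing.Theory.

Set Implicit Arguments.
Unset Strict Implicit.

Local Open Scope ring_scope.

Lemma ord2P (p : 'I_2) : p = 0 \/ p = 1.
Proof. case: p => [[|[|m]]] H; [left|right|]; try exact: val_inj; by []. Qed.

Lemma mx2_mul (a b c d a' b' c' d' : Ct) :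
  mx2 a b c d *m mx2 a' b' c' d' =
  mx2 (a * a' + b * c') (a * b' + b * d') (c * a' + d * c') (c * b' + d * d').
Proof.
apply/matrixP => p q; rewrite !mxE !big_ord_recr big_ord0 /= add0r !mxE.
by case: (ord2P p) => ->; case: (ord2P q) => ->.
Qed.

Lemma scalar_mx2 (c : Ct) : c%:M = mx2 c 0 0 c.
Proof.
apply/matrixP => p q; rewrite !mxE.
by case: (ord2P p) => ->; case: (ord2P q) => ->.
Qed.

Lemma scale_E2 (c : Ct) : c *: E2 = mx2 c 0 0 c.
Proof.
apply/matrixP => p q; rewrite !mxE.
by case: (ord2P p) => ->; case: (ord2P q) => ->; rewrite ?mulr1 ?mulr0.
Qed.

Lemma E2_1 : E2 = 1%:M.
Proof. by rewrite scalar_mx2. Qed.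

Lemma mx2_eq a b c d a' b' c' d' : a = a' -> b = b' -> c = c' -> d = d' ->
  mx2 a b c d = mx2 a' b' c' d'.
Proof. by move=> -> -> -> ->. Qed.

Lemma coef_tmul (f : Ct) m : fcoef (tt_ * f) m.+1 = fcoef f m.
Proof.
change (fcoef (fpsmul (fpsX CC) f) m.+1 = fcoef f m).
rewrite [fcoef _ _]/= big_ord_recl big_ord_recl.
under eq_bigr => k _ do rewrite /= mul0r.
rewrite big_const_ord.
have -> : forall p, iter p (+%R 0) (0:CC) = 0 by elim=> //= p ->; rewrite addr0.
rewrite addr0.
have e0 : ((@ord0 m.+1 : nat) == 1%N) = false by [].
have e1 : ((lift ord0 (@ord0 m)) : nat) = 1%N by [].
rewrite e0 e1 eqxx mul0r mul1r add0r subSS subn0.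
reflexivity.
Qed.

Lemma tmulI (f g : Ct) : tt_ * f = tt_ * g -> f = g.
Proof.
move=> H; apply: fpsP => m; by rewrite -(coef_tmul f) -(coef_tmul g) H.
Qed.




Lemma XY a I J r i j b :
  MIJ_x I J r i j b a *m MIJ_y I J r i j b a = tt_%:M /\
  MIJ_y I J r i j b a *m MIJ_x I J r i j b a = tt_%:M.
Proof.
rewrite /MIJ_x /MIJ_y scalar_mx2.
case: pickP => [l _|_]; last case: pickP => [l _|_]; last case: ifP => _.
- rewrite !mx2_mul; split; apply: mx2_eq; ring.
- rewrite !mx2_mul; split; apply: mx2_eq; ring.
- rewrite scale_E2 /E2 !mx2_mul; split; apply: mx2_eq; ring.
- rewrite scale_E2 /E2 !mx2_mul; split; apply: mx2_eq; ring.
Qed.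


Lemma tcancel_mx (R : comNzRingType) (t : R) (tI : forall f g : R, t * f = t * g -> f = g)
  (A B : 'M[R]_2) : t%:M * A = t%:M * B -> A = B.
Proof.
rewrite -!mulmxE !mul_scalar_mx => /matrixP H; apply/matrixP => p q.
by move: (H p q); rewrite !mxE; apply: tI.
Qed.

Lemma scal_cancel (R : comNzRingType) (t : R) (tI : forall f g : R, t * f = t * g -> f = g)
  p (A B : 'M[R]_2) : (t ^+ p)%:M * A = (t ^+ p)%:M * B -> A = B.
Proof.
elim: p A B => [|p IH] A B; first by rewrite expr0 !mul1r.
rewrite exprS scalar_mxM -!mulrA => /(tcancel_mx tI); exact: IH.
Qed.

Lemma scC (R : comNzRingType) (c : R) (A : 'M[R]_2) : c%:M * A = A * c%:M.
Proof. by rewrite -!mulmxE mul_scalar_mx mul_mx_scalar. Qed.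

Lemma tele (R : comNzRingType) (t : R) (x y : nat -> 'M[R]_2)
  (hyx : forall a, y a * x a = t%:M) m w :
  \prod_(q < m) y (w + 1 + q)%N * \prod_(q < m) x (w + m - q)%N = (t ^+ m)%:M.
Proof.
elim: m w => [|m IH] w; first by rewrite !big_ord0 mulr1 expr0.
rewrite big_ord_recl big_ord_recr /=.
have e1 : \prod_(q < m) y (w + 1 + bump 0 q)%N = \prod_(q < m) y (w.+1 + 1 + q)%N.
  by apply: eq_bigr => q _; congr y; rewrite /bump /=; lia.
have e2 : \prod_(q < m) x (w + m.+1 - widen_ord (leqnSn m) q)%N = \prod_(q < m) x (w.+1 + m - q)%N.
  by apply: eq_bigr => q _; congr x; rewrite /=; lia.
have e3 : (w + m.+1 - @ord_max m)%N = (w + 1)%N by rewrite /=; lia.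
rewrite e1 e2 e3 addn0 -mulrA (mulrA (\prod_(q < m) _)) IH.

by rewrite scC mulrA hyx -mulmxE -scalar_mxM -exprS.
Qed.

Lemma Fall (R : comNzRingType) (t : R) (tI : forall f g : R, t * f = t * g -> f = g)
  n (c : R) (x y : nat -> 'M[R]_2)
  (hxy : forall a, x a * y a = t%:M) (hper : forall a, (0 < a)%N -> x (a + n)%N = x a)
  (hn : (0 < n)%N) (h0 : \prod_(q < n) x (n - q)%N = c%:M) :
  forall v, \prod_(q < n) x (v + n - q)%N = c%:M.
Proof.
elim=> [|v IH]; first by rewrite add0n.
case: n hper hn h0 IH => // n hper _ _ IH.
rewrite big_ord_recl /=.
move: IH; rewrite big_ord_recr /=.
have e1 : \prod_(q < n) x (v + n.+1 - widen_ord (leqnSn n) q)%N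
   = \prod_(q < n) x (v.+1 + n.+1 - bump 0 q)%N.
  by apply: eq_bigr => q _; congr x; rewrite /bump /=; lia.
have e2 : (v + n.+1 - @ord_max n)%N = v.+1 by rewrite /=; lia.
have e3 : (v.+1 + n.+1 - 0)%N = (v.+1 + n.+1)%N by lia.
rewrite e1 e2 e3 hper //.
set A := \prod_(q < n) _ => IH.
have H1 : (x v.+1 * A) * x v.+1 = c%:M * x v.+1 by rewrite -mulrA IH scC.
have H2 : (x v.+1 * A) * t%:M = c%:M * t%:M by rewrite -(hxy v.+1) !mulrA H1.
apply: (tcancel_mx tI); by rewrite scC H2 scC.
Qed.

Lemma gen_main (R : comNzRingType) (t : R) (tI : forall f g : R, t * f = t * g -> f = g)
  n k (x y : nat -> 'M[R]_2)
  (hyx : forall a, y a * x a = t%:M) (hk : (k <= n)%N)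
  (hF : forall v, \prod_(q < n) x (v + n - q)%N = (t ^+ (n - k))%:M) v :
  \prod_(q < k) x (v + k - q)%N = \prod_(q < n - k) y (v + k + 1 + q)%N.
Proof.
have [m en] : exists m, n = (m + k)%N by exists (n - k)%N; rewrite subnK.
subst n; rewrite addnK in hF *.
have sp : \prod_(q < m + k) x (v + (m + k) - q)%N =
   \prod_(q < m) x (v + k + m - q)%N * \prod_(q < k) x (v + k - q)%N.
  by rewrite big_split_ord; congr (_ * _); apply: eq_bigr => q _; congr x; rewrite /=; lia.
have T := tele hyx m (v + k).
have F := hF v; rewrite sp in F.
apply: (scal_cancel tI (p := m)).
by rewrite -{1}T -mulrA F scC.
Qed.



Definition hyps (n r : nat) (I J : {fset nat}) (i j : nat -> nat) : Prop :=
 [/\ (forall x, x \in (I `\` J)%fset <-> exists2 l, (1 <= l <= r)%N & x = i l),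
     (forall x, x \in (J `\` I)%fset <-> exists2 l, (1 <= l <= r)%N & x = j l),
     (forall l, (1 <= l <= r)%N -> (1 <= i l)%N /\ (i l < j l)%N /\ (j l <= n)%N) &
     (forall l, (1 <= l < r)%N -> (j l < i l.+1)%N)].

Lemma strict n r I J i j (H : hyps n r I J i j) l l' :
  (1 <= l)%N -> (l < l')%N -> (l' <= r)%N -> (j l < i l')%N.
Proof.
case: H => _ _ h3 h4 h1.
elim: l' => [|l' IH] hl hl'; first by lia.
have e4 : (j l' < i l'.+1)%N by apply: h4; lia.
case: (ltngtP l l') => [hlt||e]; last (by subst; lia); last by lia.
have e5 := IH hlt (ltnW hl').
have [_ [e6 _]] : (1 <= i l')%N /\ (i l' < j l')%N /\ (j l' <= n)%N by apply: h3; lia.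
lia.
Qed.

Lemma ijlt n r I J i j (H : hyps n r I J i j) l : (1 <= l <= r)%N -> (i l < j l)%N.
Proof. by case: H => _ _ h3 _ /h3 [_ []]. Qed.

Lemma facts n r I J i j (H : hyps n r I J i j) (l l' : 'I_r) :
  (i l.+1 < j l.+1)%N /\ ((l < l')%N -> (j l.+1 < i l'.+1)%N).
Proof.
split; first by apply: (ijlt H); have := ltn_ord l; lia.
move=> hlt; apply: (strict H) => //; have := ltn_ord l'; lia.
Qed.

Lemma inj_i n r I J i j (H : hyps n r I J i j) (l l' : 'I_r) : i l.+1 = i l'.+1 -> l = l'.
Proof.
move=> e; apply: val_inj => /=.
have [a1 a2] := facts H l l'; have [b1 b2] := facts H l' l.
case: (ltngtP l l') => h //; [have := a2 h | have := b2 h]; lia.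
Qed.

Lemma inj_j n r I J i j (H : hyps n r I J i j) (l l' : 'I_r) : j l.+1 = j l'.+1 -> l = l'.
Proof.
move=> e; apply: val_inj => /=.
have [a1 a2] := facts H l l'; have [b1 b2] := facts H l' l.
case: (ltngtP l l') => h //; [have := a2 h | have := b2 h]; lia.
Qed.

Lemma ne_ij n r I J i j (H : hyps n r I J i j) (l l' : 'I_r) : i l.+1 <> j l'.+1.
Proof.
move=> e.
have [a1 a2] := facts H l l'; have [b1 b2] := facts H l' l.
case: (ltngtP l l') => h; [have := a2 h | have := b2 h | move: h => /val_inj h; subst]; lia.
Qed.

Lemma x_i n r I J i j b (H : hyps n r I J i j) (L : 'I_r) :
  MIJ_x I J r i j b (i L.+1) = mx2 tt_ (b (2 * L.+1 - 1)%N) 0 1.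
Proof.
rewrite /MIJ_x; case: pickP => [l /eqP e|/(_ L)]; last by rewrite eqxx.
by rewrite (inj_i H e).
Qed.

Lemma x_j n r I J i j b (H : hyps n r I J i j) (L : 'I_r) :
  MIJ_x I J r i j b (j L.+1) = mx2 1 (b (2 * L.+1)%N) 0 tt_.
Proof.
rewrite /MIJ_x; case: pickP => [l /eqP e|_]; first by case: (ne_ij H e).
case: pickP => [l /eqP e|/(_ L)]; last by rewrite eqxx.
by rewrite (inj_j H e).
Qed.

Lemma x_none r I J i j b a :
  (forall l : 'I_r, i l.+1 != a /\ j l.+1 != a) ->
  MIJ_x I J r i j b a = if (a \in I) && (a \in J) then E2 else tt_ *: E2.
Proof.
move=> hn; rewrite /MIJ_x; case: pickP => [l e|_]; first by case: (hn l) => /negP.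
case: pickP => [l e|_] //; by case: (hn l) => _ /negP.
Qed.


Lemma memi n r I J i j (H : hyps n r I J i j) (L : 'I_r) :
  (i L.+1 \in I) /\ (i L.+1 \notin J).
Proof.
case: H => h1 _ _ _.
have : i L.+1 \in (I `\` J)%fset by apply/h1; exists L.+1 => //; have := ltn_ord L; lia.
by rewrite in_fsetD => /andP [].
Qed.

Lemma memj n r I J i j (H : hyps n r I J i j) (L : 'I_r) :
  (j L.+1 \in J) /\ (j L.+1 \notin I).
Proof.
case: H => _ h1 _ _.
have : j L.+1 \in (J `\` I)%fset by apply/h1; exists L.+1 => //; have := ltn_ord L; lia.
by rewrite in_fsetD => /andP [].
Qed.

Lemma classify n r I J i j (H : hyps n r I J i j) a :
  (exists L : 'I_r, a = i L.+1) \/ (exists L : 'I_r, a = j L.+1) \/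
  ((forall l : 'I_r, i l.+1 != a /\ j l.+1 != a) /\ ((a \in I) = (a \in J))).
Proof.
have H' := H; case: H' => h1 h2 _ _.
case: (boolP (a \in (I `\` J)%fset)) => [/h1 [l hl ->]|n1].
  left; have hl' : (l.-1 < r)%N by lia.
  by exists (Ordinal hl') => /=; congr i; lia.
case: (boolP (a \in (J `\` I)%fset)) => [/h2 [l hl ->]|n2].
  right; left; have hl' : (l.-1 < r)%N by lia.
  by exists (Ordinal hl') => /=; congr j; lia.
right; right; split.
  move=> l; split; apply/eqP => e; [move: n1 | move: n2]; rewrite -e in_fsetD.
    by have [-> ->] := memi H l.
  by have [-> ->] := memj H l.
move: n1 n2; rewrite !in_fsetD.
by case: (a \in I); case: (a \in J).
Qed.

Definition phase r (i j : nat -> nat) m : bool :=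
  [exists l : 'I_r, (i l.+1 <= m)%N && (m < j l.+1)%N].

Lemma phaseA n r I J i j (H : hyps n r I J i j) (L : 'I_r) m :
  m.+1 = i L.+1 -> phase r i j m = false /\ phase r i j m.+1 = true.
Proof.
move=> e; split.
  apply/existsP => [[l /andP [h1 h2]]].
  have [a1 a2] := facts H l L; have [b1 b2] := facts H L l.
  case: (ltngtP l L) => h; [have := a2 h | have := b2 h | move: h => /val_inj h; subst]; lia.
apply/existsP; exists L; apply/andP; have [a1 _] := facts H L L; lia.
Qed.

Lemma phaseB n r I J i j (H : hyps n r I J i j) (L : 'I_r) m :
  m.+1 = j L.+1 -> phase r i j m = true /\ phase r i j m.+1 = false.
Proof.
move=> e; split.
  apply/existsP; exists L; apply/andP; have [a1 _] := facts H L L; lia.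
apply/existsP => [[l /andP [h1 h2]]].
have [a1 a2] := facts H l L; have [b1 b2] := facts H L l.
case: (ltngtP l L) => h; [have := a2 h | have := b2 h | move: h => /val_inj h; subst]; lia.
Qed.

Lemma phaseN r i j m :
  (forall l : 'I_r, i l.+1 != m.+1 /\ j l.+1 != m.+1) -> phase r i j m.+1 = phase r i j m.
Proof.
move=> hn; apply/existsP/existsP => -[l /andP [h1 h2]]; exists l; apply/andP;
  have [/eqP n1 /eqP n2] := hn l; lia.
Qed.

Lemma phase0 n r I J i j (H : hyps n r I J i j) : phase r i j 0 = false.
Proof.
apply/existsP => [[l /andP [h1 h2]]]; case: H => _ _ h3 _.
have [h _] : (1 <= i l.+1)%N /\ (i l.+1 < j l.+1)%N /\ (j l.+1 <= n)%N by apply: h3; have := ltn_ord l; lia.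
lia.
Qed.

Lemma phasen n r I J i j (H : hyps n r I J i j) : phase r i j n = false.
Proof.
apply/existsP => [[l /andP [h1 h2]]]; case: H => _ _ h3 _.
have [_ [_ h]] : (1 <= i l.+1)%N /\ (i l.+1 < j l.+1)%N /\ (j l.+1 <= n)%N by apply: h3; have := ltn_ord l; lia.
lia.
Qed.

Definition cnt (A : {fset nat}) m := count (fun a => a \notin A) (iota 1 m).

Lemma cntS A m : cnt A m.+1 = (cnt A m + (m.+1 \notin A))%N.
Proof.
have e : iota 1 (m + 1) = iota 1 m ++ [:: 1 + m] by rewrite iotaD.
rewrite addn1 in e.
by rewrite /cnt e count_cat /= addn0.
Qed.

Lemma cnt_phase n r I J i j (H : hyps n r I J i j) m :
  cnt J m = (cnt I m + phase r i j m)%N.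
Proof.
elim: m => [|m IH]; first by rewrite /cnt /= (phase0 H).
rewrite !cntS.
case: (classify H m.+1) => [[L e]|[[L e]|[hn e]]].
- have [p1 p2] := phaseA H e; have [m1 m2] := memi H L.
  move: IH; rewrite p1 p2 e m1 m2 /=; lia.
- have [p1 p2] := phaseB H e; have [m1 m2] := memj H L.
  move: IH; rewrite p1 p2 e m1 m2 /=; lia.
- by rewrite (phaseN hn) IH e; lia.
Qed.

Lemma cnt_card (A : {fset nat}) n : (forall x, x \in A -> (1 <= x <= n)%N) ->
  cnt A n = (n - #|` A|)%N.
Proof.
move=> hA.
have hc := count_predC (fun a => a \in A) (iota 1 n).
have e : count (fun a => a \in A) (iota 1 n) = #|` A|.
  rewrite -size_filter; apply: perm_size; apply: uniq_perm.
  - by rewrite filter_uniq // iota_uniq.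
  - exact: fset_uniq.
  move=> x; rewrite mem_filter mem_iota.
  case: (boolP (x \in A)) => hx /=; last by [].
  by have := hA x hx; move=> /andP [h1 h2]; apply/andP; split; lia.
rewrite size_iota in hc.
have hc' : (count (fun a => a \in A) (iota 1 n) + cnt A n)%N = n by exact: hc.
rewrite e in hc'; lia.
Qed.


Lemma natS_split (R : comNzRingType) (x m : nat) :
  (((x <= m.+1)%N)%:R : R) = ((x <= m)%N)%:R + (x == m.+1)%:R.
Proof.
case: (ltngtP x m.+1) => h.
- have -> : (x <= m)%N = true by lia.
  by rewrite addr0.
- have -> : (x <= m)%N = false by apply/negP; lia.
  by rewrite addr0.
- have -> : (x <= m)%N = false by apply/negP; lia.
  by rewrite add0r.
Qed.

Lemma sum_delta (R : comNzRingType) r (p q : 'I_r -> nat) (u w : 'I_r -> R) m :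
  \sum_(l < r) (((p l <= m.+1)%N)%:R * u l + ((q l <= m.+1)%N)%:R * w l) =
  \sum_(l < r) (((p l <= m)%N)%:R * u l + ((q l <= m)%N)%:R * w l) +
  \sum_(l < r) ((p l == m.+1)%:R * u l + (q l == m.+1)%:R * w l).
Proof.
rewrite -big_split; apply: eq_bigr => l _ /=.
rewrite !natS_split; ring.
Qed.

Lemma sum_single (R : comNzRingType) r (L : 'I_r) (F : 'I_r -> R) :
  (forall l, l != L -> F l = 0) -> \sum_(l < r) F l = F L.
Proof. by move=> h; rewrite (bigD1 L) //= big1 ?addr0. Qed.

Lemma sum_zero (R : comNzRingType) r (F : 'I_r -> R) :
  (forall l, F l = 0) -> \sum_(l < r) F l = 0.
Proof. by move=> h; rewrite big1. Qed.

Lemma sum_pairs (R : comNzRingType) (b : nat -> R) r :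
  \sum_(l < r) (b (2 * l.+1 - 1)%N + b (2 * l.+1)%N) = \sum_(1 <= l < (2 * r).+1) b l.
Proof.
elim: r => [|r IH]; first by rewrite big_ord0 big_geq.
rewrite big_ord_recr /= IH.
have -> : (2 * r.+1).+1 = ((2 * r).+1).+2 by lia.
rewrite (big_nat_recr (2*r).+2) // (big_nat_recr (2*r).+1) //.
have e1 : (2 * r.+1 - 1)%N = (2*r).+1 by lia.
have e2 : (2 * r.+1)%N = (2*r).+2 by lia.
by rewrite e1 e2 addrA.
Qed.

Lemma sum_all (R : comNzRingType) r (p q : 'I_r -> nat) (u w : 'I_r -> R) n :
  (forall l, (p l <= n)%N /\ (q l <= n)%N) ->
  \sum_(l < r) (((p l <= n)%N)%:R * u l + ((q l <= n)%N)%:R * w l) = \sum_(l < r) (u l + w l).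
Proof. by move=> h; apply: eq_bigr => l _; case: (h l) => -> ->; rewrite !mul1r. Qed.


Definition Sb r (i j : nat -> nat) (b : nat -> Ct) m : Ct :=
  \sum_(l < r) (((i l.+1 <= m)%N)%:R * b (2 * l.+1 - 1)%N + ((j l.+1 <= m)%N)%:R * b (2 * l.+1)%N).

Lemma SA n r I J i j b (H : hyps n r I J i j) (L : 'I_r) m :
  m.+1 = i L.+1 -> Sb r i j b m.+1 = Sb r i j b m + b (2 * L.+1 - 1)%N.
Proof.
move=> e; rewrite /Sb (sum_delta (R := Ct)); congr (_ + _).
rewrite (sum_single (R := Ct) (L := L)); last first.
  move=> l hl; rewrite e.
  have -> : (i l.+1 == i L.+1) = false by apply/eqP => h; move: hl; rewrite (inj_i H h) eqxx.
  have -> : (j l.+1 == i L.+1) = false by apply/eqP => h; exact: (ne_ij H (esym h)).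
  by rewrite !mul0r addr0.
rewrite e eqxx.
have -> : (j L.+1 == i L.+1) = false by apply/eqP => h; exact: (ne_ij H (esym h)).
by rewrite mul1r mul0r addr0.
Qed.

Lemma SB n r I J i j b (H : hyps n r I J i j) (L : 'I_r) m :
  m.+1 = j L.+1 -> Sb r i j b m.+1 = Sb r i j b m + b (2 * L.+1)%N.
Proof.
move=> e; rewrite /Sb (sum_delta (R := Ct)); congr (_ + _).
rewrite (sum_single (R := Ct) (L := L)); last first.
  move=> l hl; rewrite e.
  have -> : (j l.+1 == j L.+1) = false by apply/eqP => h; move: hl; rewrite (inj_j H h) eqxx.
  have -> : (i l.+1 == j L.+1) = false by apply/eqP => h; exact: (ne_ij H h).
  by rewrite !mul0r addr0.
rewrite e eqxx.
have -> : (i L.+1 == j L.+1) = false by apply/eqP => h; exact: (ne_ij H h).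
by rewrite mul1r mul0r add0r.
Qed.

Lemma SN r i j b m :
  (forall l : 'I_r, i l.+1 != m.+1 /\ j l.+1 != m.+1) -> Sb r i j b m.+1 = Sb r i j b m.
Proof.
move=> hn; rewrite /Sb (sum_delta (R := Ct)).
have hz : \sum_(l < r) ((i l.+1 == m.+1)%:R * b (2 * l.+1 - 1)%N +
                      (j l.+1 == m.+1)%:R * b (2 * l.+1)%N) = (0 : Ct).
  apply: (sum_zero (R := Ct)) => l.
  by case: (hn l) => /negbTE -> /negbTE ->; rewrite !mul0r addr0.
by rewrite hz addr0.
Qed.

Lemma S0 n r I J i j b (H : hyps n r I J i j) : Sb r i j b 0 = 0.
Proof.
rewrite /Sb (sum_zero (R := Ct)) // => l; case: H => _ _ h3 _.
have [h [h' _]] : (1 <= i l.+1)%N /\ (i l.+1 < j l.+1)%N /\ (j l.+1 <= n)%N by apply: h3; have := ltn_ord l; lia.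
have -> : (i l.+1 <= 0)%N = false by lia.
have -> : (j l.+1 <= 0)%N = false by lia.
by rewrite !mul0r addr0.
Qed.

Lemma Sn n r I J i j b (H : hyps n r I J i j) :
  Sb r i j b n = \sum_(1 <= l < (2 * r).+1) b l.
Proof.
rewrite /Sb (sum_all (R := Ct)) ?sum_pairs // => l; case: H => _ _ h3 _.
have [h [h' h'']] : (1 <= i l.+1)%N /\ (i l.+1 < j l.+1)%N /\ (j l.+1 <= n)%N by apply: h3; have := ltn_ord l; lia.
split; lia.
Qed.


Lemma algA (R : comNzRingType) (t g T S bo : R) :
  t * g = T * S -> t * (t * g + bo * T) = (t * T) * (S + bo).
Proof. move=> h; rewrite mulrDr h; ring. Qed.

Lemma algB (R : comNzRingType) (t g T S be : R) :
  t * g = (t * T) * S -> t * (g + be * T) = (t * T) * (S + be).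
Proof. move=> h; rewrite mulrDr h; ring. Qed.

Lemma algD (R : comNzRingType) (t g T S : R) :
  t * g = T * S -> t * (t * g) = (t * T) * S.
Proof. move=> h; rewrite h; ring. Qed.

Definition Pm I J r i j b m : 'M[Ct]_2 := \prod_(q < m) MIJ_x I J r i j b (m - q)%N.

Lemma Pm_S I J r i j b m : Pm I J r i j b m.+1 = MIJ_x I J r i j b m.+1 *m Pm I J r i j b m.
Proof.
rewrite /Pm big_ord_recl mulmxE subn0; congr (_ * _).
Qed.

Lemma pm_inv n r I J i j b (H : hyps n r I J i j) m :
  exists g, Pm I J r i j b m = mx2 (tt_ ^+ cnt J m) g 0 (tt_ ^+ cnt I m) /\
            tt_ * g = tt_ ^+ cnt J m * Sb r i j b m.
Proof.
elim: m => [|m [g [IH1 IH2]]].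
  exists 0; rewrite /Pm big_ord0 (S0 _ H) /cnt /= expr0 mulr0 mulr0; split => //.
  by rewrite -scalar_mx2.
have hc := cnt_phase H m.
rewrite Pm_S IH1 !cntS.
case: (classify H m.+1) => [[L e]|[[L e]|[hn e]]].
- have [p1 p2] := phaseA H e; have [m1 m2] := memi H L.
  rewrite p1 addn0 in hc.
  rewrite (SA _ H e) e (x_i _ H) m1 m2 -hc /= addn1 addn0.
  exists (tt_ * g + b (2 * L.+1 - 1)%N * tt_ ^+ cnt J m); split.
    rewrite mx2_mul; apply: mx2_eq; rewrite ?exprS; ring.
  rewrite exprS; exact: (@algA Ct _ _ _ _ _ IH2).
- have [p1 p2] := phaseB H e; have [m1 m2] := memj H L.
  rewrite p1 addn1 in hc.
  rewrite (SB _ H e) e (x_j _ H) m1 m2 hc /= addn1 addn0.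
  exists (g + b (2 * L.+1)%N * tt_ ^+ cnt I m); split.
    rewrite mx2_mul; apply: mx2_eq; rewrite ?exprS; ring.
  rewrite hc exprS in IH2; rewrite exprS; exact: (@algB Ct _ _ _ _ _ IH2).
- rewrite (SN b hn) (x_none I J b hn) -e.
  case: (boolP (m.+1 \in I)) => hI /=.
    rewrite E2_1 !addn0 mul1mx; exists g; split => //.
  rewrite !addn1.
  exists (tt_ * g); split.
    rewrite (scale_E2 tt_) mx2_mul; apply: mx2_eq; rewrite ?exprS; ring.
  rewrite exprS; exact: (@algD Ct _ _ _ _ IH2).
Qed.


Lemma lab_id n a : (1 <= a <= n)%N -> lab n a = a.
Proof. move=> h; rewrite /lab modn_small; lia. Qed.

Lemma lab_per n a : (0 < a)%N -> lab n (a + n) = lab n a.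
Proof.
move=> h; rewrite /lab; have -> : (a + n).-1 = (a.-1 + n)%N by lia.
by rewrite modnDr.
Qed.


Local Close Scope ring_scope.

Theorem proposition3p1 (n k r : nat) (I J : {fset nat})
    (i j : nat -> nat) (b : nat -> Ct) :
  (1 <= k <= n - 1)%N ->
  ksubset n k I -> ksubset n k J ->
  tightly_interlacing k r I J ->
  (* I \ J = {i_1, ..., i_r} and J \ I = {j_1, ..., j_r} *)
  (forall x, x \in (I `\` J)%fset <-> exists2 l, (1 <= l <= r)%N & x = i l) ->
  (forall x, x \in (J `\` I)%fset <-> exists2 l, (1 <= l <= r)%N & x = j l) ->
  (* 1 <= i_1 < j_1 < i_2 < j_2 < ... < i_r < j_r <= n *)
  (forall l, (1 <= l <= r)%N -> (1 <= i l)%N /\ (i l < j l)%N /\ (j l <= n)%N) ->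
  (forall l, (1 <= l < r)%N -> (j l < i l.+1)%N) ->
  (\sum_(1 <= l < (2 * r).+1) b l)%R = 0%R ->
  CM_rep n k (MIJ_x I J r i j b) (MIJ_y I J r i j b).
Proof.
Local Open Scope ring_scope.
move=> hk [kI1 kI2] [kJ1 kJ2] _ hI hJ hord hch hsum.
have H : hyps n r I J i j by split.
have hn : (0 < n)%N by move: hk; clear; lia.
have hkn : (k <= n)%N by move: hk; clear; lia.
pose x a := MIJ_x I J r i j b (lab n a).
pose y a := MIJ_y I J r i j b (lab n a).
have hxy : forall a, x a * y a = tt_%:M.
  move=> a; have [h1 _] := XY (lab n a) I J r i j b.
  rewrite -mulmxE; exact: h1.
have hyx : forall a, y a * x a = tt_%:M.
  move=> a; have [_ h1] := XY (lab n a) I J r i j b.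
  rewrite -mulmxE; exact: h1.
have hper : forall a, (0 < a)%N -> x (a + n)%N = x a by move=> a ha; rewrite /x lab_per.
have hP : Pm I J r i j b n = (tt_ ^+ (n - k))%:M.
  have [g [h1 h2]] := pm_inv b H n.
  rewrite (Sn b H) hsum mulr0 in h2.
  have g0 : g = 0 by apply: tmulI; rewrite h2 mulr0.
  have cJ : cnt J n = (n - k)%N by rewrite (cnt_card kJ1) kJ2.
  have cI : cnt I n = (n - k)%N by rewrite (cnt_card kI1) kI2.
  by rewrite h1 g0 cJ cI scalar_mx2.
have h0 : \prod_(q < n) x (n - q)%N = (tt_ ^+ (n - k))%:M.
  rewrite -hP /Pm; apply: eq_bigr => q _; rewrite /x lab_id //.
  by rewrite subn_gt0 ltn_ord leq_subr.
have hF := Fall tmulI hxy hper hn h0.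
move=> v hv; split.
- case: (XY (lab n v) I J r i j b) => -> _.
  case: (XY (lab n v.+1) I J r i j b) => _ ->.
  reflexivity.
- case: (XY (lab n v) I J r i j b) => -> _; reflexivity.
- have := gen_main tmulI hyx hkn hF v. rewrite /x /y. move=> hh. exact: hh.
Qed.
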